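(* Under the exploration assumption in the context, for any policy $\pi$ with $\pi_{\min}:=\min_{s,a}\pi(a\mid s)>0$, the pair \[ \bar C_\pi=\Big(1-\tfrac12\delta_b\pi_{\min}^{r_b+1}\mu_{\pi_b,\min}\pi_{b,\min}\Big)^{-1},\qquad\bar\rho_\pi=\Big(1-\tfrac12\delta_b\pi_{\min}^{r_b+1}\mu_{\pi_b,\min}\pi_{b,\min}\Big)^{1/(r_b+1)} \] are valid mixing parameters of the lazy transition matrix $\bar{\mathcal P}_\pi$, i.e. $\max_{(s,a)}\|\bar{\mathcal P}_\pi^k((s,a),\cdot)-\bar\mu_\pi\|_{\mathrm{TV}}\le\bar C_\pi\bar\rho_\pi^k$ for all $k\ge0$.
   Context: Finite MDP: states $\mathcal S$, actions $\mathcal A$, kernel $p(s'\mid s,a)$. Exploration assumption: a policy $\pi_b$ with $\pi_b(a\mid s)>0$ for all $(s,a)$ induces an irreducible state chain $P_{\pi_b}(s,s')=\sum_ap(s'\mid s,a)\pi_b(a\mid s)$; $\pi_{b,\min}=\min_{s,a}\pi_b(a\mid s)$; $\mu_{\pi_b}$ its stationary distribution and $\mu_{\pi_b,\min}=\min_s\mu_{\pi_b}(s)$; $\mathcal P_{\pi_b}=(P_{\pi_b}+I)/2$; $r_b\in\mathbb Z_+$ and $\delta_b>0$ satisfy $\min_{s,s'}\mathcal P_{\pi_b}^{r_b}(s,s')\ge\delta_b$. For a policy $\pi$ with positive entries, $\bar P_\pi((s,a),(s',a'))=p(s'\mid s,a)\pi(a'\mid s')$ is the state-action transition matrix, $\bar{\mathcal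 P}_\pi=(\bar P_\pi+I)/2$ its lazy version, and $\bar\mu_\pi(s,a)=\mu_\pi(s)\pi(a\mid s)$ its stationary distribution, with $\mu_\pi$ the stationary distribution of the state chain $P_\pi$. $\|\cdot\|_{\mathrm{TV}}$ is the total variation distance. *)

(* Defs.v *)
From HB Require Import structures.
From mathcomp Require Import all_boot all_order all_algebra.
From mathcomp Require Import reals exp.
Set Implicit Arguments. Unset Strict Implicit. Unset Printing Implicit Defensive.
Import Order.TTheory GRing.Theory Num.Theory.
Local Open Scope ring_scope.

Fixpoint mpow (R : realType) (X : finType) (k : nat) (P : X -> X -> R) : X -> X -> R :=
  match k with
  | 0%N => fun x y => (x == y)%:R
  | k'.+1 => fun x y => \sum_(z : X) mpow k' P x z * P z y
  end.

Definition lazyK (R : realType) (X : finType) (P : X -> X -> R) : X -> X -> R :=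
  fun x y => (P x y + (x == y)%:R) / 2.

(* minimum of a function over a finite type (0 if the type is empty) *)
Definition fmin (R : realType) (X : finType) (f : X -> R) : R :=
  match [pick x : X] with
  | Some x0 => \big[Order.min/f x0]_(x : X) f x
  | None => 0
  end.

Definition tv (R : realType) (X : finType) (m1 m2 : X -> R) : R :=
  (\sum_(x : X) `|m1 x - m2 x|) / 2.

Definition stochastic (R : realType) (X : finType) (P : X -> X -> R) : Prop :=
  (forall x y, 0 <= P x y) /\ (forall x, \sum_(y : X) P x y = 1).

Definition distribution (R : realType) (X : finType) (m : X -> R) : Prop :=
  (forall x, 0 <= m x) /\ \sum_(x : X) m x = 1.

Definition stationary (R : realType) (X : finType) (P : X -> X -> R) (m : X -> R) : Prop :=
  distribution m /\ (forall y, \sum_(x : X) m x * P x y = m y).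

Definition irreducible (R : realType) (X : finType) (P : X -> X -> R) : Prop :=
  forall x y, exists n, 0 < mpow n P x y.

(* MDP kernel p(s'|s,a) : p s a s' ; policy pi(a|s) : pi s a *)
Definition mdp_kernel (R : realType) (S A : finType) (p : S -> A -> S -> R) : Prop :=
  (forall s a s', 0 <= p s a s') /\ (forall s a, \sum_(s' : S) p s a s' = 1).

Definition policy (R : realType) (S A : finType) (pi : S -> A -> R) : Prop :=
  (forall s a, 0 <= pi s a) /\ (forall s, \sum_(a : A) pi s a = 1).

Definition Pstate (R : realType) (S A : finType) (p : S -> A -> S -> R) (pi : S -> A -> R)
  : S -> S -> R := fun s s' => \sum_(a : A) p s a s' * pi s a.

Definition Pbar (R : realType) (S A : finType) (p : S -> A -> S -> R) (pi : S -> A -> R)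
  : (S * A)%type -> (S * A)%type -> R := fun x y => p x.1 x.2 y.1 * pi y.1 y.2.

(* stationary distribution of the state-action chain *)
Definition mubar (R : realType) (S A : finType) (mu : S -> R) (pi : S -> A -> R)
  : (S * A)%type -> R := fun x => mu x.1 * pi x.1 x.2.

Definition polmin (R : realType) (S A : finType) (pi : S -> A -> R) : R :=
  fmin (fun x : (S * A)%type => pi x.1 x.2).

(* Main.v *)
Require Import Defs.
From HB Require Import structures.
From mathcomp Require Import all_boot all_order all_algebra.
From mathcomp Require Import reals exp.
From mathcomp Require Import ring lra.
Set Warnings "-notation-overridden -ambiguous-paths".

Import Order.TTheory GRing.Theory Num.Theory.
Local Open Scope ring_scope.

Lemma mpow_add (R : realType) (X : finType) (P : X -> X -> R) a b x y :
  mpow (a + b) P x y = \sum_z mpow a P x z * mpow b P z y.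
Proof.
elim: b y => [|b IH] y /=.
  rewrite addn0 (bigD1 y) //= eqxx mulr1 big1 ?addr0 // => z /negbTE ->.
  by rewrite mulr0.
rewrite addnS /=.
under eq_bigr => w _ do rewrite IH mulr_suml.
rewrite exchange_big /=; apply: eq_bigr => z _.
by rewrite mulr_sumr; apply: eq_bigr => w _; rewrite mulrA.
Qed.

Lemma mpow1 (R : realType) (X : finType) (P : X -> X -> R) x y :
  mpow 1 P x y = P x y.
Proof.
rewrite /= (bigD1 x) //= eqxx mul1r big1 ?addr0 // => z.
by rewrite eq_sym => /negbTE ->; rewrite mul0r.
Qed.

Lemma mpowS_l (R : realType) (X : finType) (P : X -> X -> R) k x y :
  mpow k.+1 P x y = \sum_z P x z * mpow k P z y.
Proof.
rewrite -add1n mpow_add; apply: eq_bigr => z _; by rewrite mpow1.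
Qed.

Lemma mpow_ge0 (R : realType) (X : finType) (P : X -> X -> R) k x y :
  (forall x y, 0 <= P x y) -> 0 <= mpow k P x y.
Proof.
move=> H; elim: k y => [|k IH] y /=; first by rewrite ler0n.
by apply: sumr_ge0 => z _; apply: mulr_ge0.
Qed.

Lemma mpow_sum1 (R : realType) (X : finType) (P : X -> X -> R) k x :
  stochastic P -> \sum_y mpow k P x y = 1.
Proof.
move=> [H0 H1]; elim: k => [|k IH] /=.
  rewrite (bigD1 x) //= eqxx big1 ?addr0 // => z.
  by rewrite eq_sym => /negbTE ->.
rewrite exchange_big /= -IH; apply: eq_bigr => z _.
by rewrite -mulr_sumr H1 mulr1.
Qed.

Lemma lazy_stoch (R : realType) (X : finType) (P : X -> X -> R) :
  stochastic P -> stochastic (lazyK P).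
Proof.
move=> [H0 H1]; split => [x y|x].
  by rewrite /lazyK divr_ge0 ?addr_ge0 ?ler0n.
rewrite /lazyK -mulr_suml big_split /= H1 (bigD1 x) //= eqxx big1 ?addr0.
  by rewrite /= divff // (_ : 1 + 1 = 2 :> R) ?pnatr_eq0.


by move=> z; rewrite eq_sym => /negbTE ->.
Qed.

Lemma mpow_mono (R : realType) (X : finType) (P Q : X -> X -> R) (c : R) k x y :
  (forall x y, 0 <= Q x y) -> 0 <= c -> (forall x y, c * Q x y <= P x y) ->
  c ^+ k * mpow k Q x y <= mpow k P x y.
Proof.
move=> HQ Hc H; elim: k y => [|k IH] y /=; first by rewrite expr0 mul1r.
rewrite mulr_sumr; apply: ler_sum => z _.
rewrite exprSr mulrACA.
apply: ler_pM => //.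
- by rewrite mulr_ge0 ?exprn_ge0 ?mpow_ge0.
- by rewrite mulr_ge0.
Qed.

Lemma doeblin (R : realType) (X : finType) (N : X -> X -> R) (eta v : X -> R) :
  (forall x, \sum_y N x y = 1) -> (forall x y, eta y <= N x y) ->
  \sum_x v x = 0 ->
  \sum_y `|\sum_x v x * N x y| <= (1 - \sum_y eta y) * \sum_x `|v x|.
Proof.
move=> H1 He Hv.
have E y : \sum_x v x * N x y = \sum_x v x * (N x y - eta y).
  under [RHS]eq_bigr => x _ do rewrite mulrBr.
  by rewrite sumrB -mulr_suml Hv mul0r subr0.
under eq_bigr => y _ do rewrite E.
apply: (le_trans (y := \sum_y \sum_x `|v x| * (N x y - eta y))).
  apply: ler_sum => y _; apply: (le_trans (ler_norm_sum _ _ _)).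
  apply: ler_sum => x _; rewrite normrM [`|N x y - _|]ger0_norm ?subr_ge0 //.
rewrite exchange_big /= mulr_sumr; apply: ler_sum => x _.
by rewrite -mulr_sumr sumrB H1 mulrC.
Qed.

Lemma sum_pair (R : realType) (S A : finType) (F : (S * A)%type -> R) :
  \sum_(z : S * A) F z = \sum_s \sum_a F (s, a).
Proof. by rewrite (pair_bigA _ (fun s a => F (s, a))); apply: eq_bigr => -[]. Qed.

Lemma fmin_le (R : realType) (X : finType) (f : X -> R) x : fmin f <= f x.
Proof.
rewrite /fmin; case: pickP => [x0 _|/(_ x) //].
exact: bigmin_le.
Qed.

Lemma fmin_ge0 (R : realType) (X : finType) (f : X -> R) :
  (forall x, 0 <= f x) -> 0 <= fmin f.
Proof.
move=> H; rewrite /fmin; case: pickP => [x0 _|//].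
by apply: le_bigmin => // i _.
Qed.

Lemma fmin_pos_ex (R : realType) (X : finType) (f : X -> R) :
  0 < fmin f -> exists x : X, True.
Proof. by rewrite /fmin; case: pickP => [x0 _ _|]; [exists x0|rewrite ltxx]. Qed.

Lemma distr_le1 (R : realType) (X : finType) (m : X -> R) x :
  distribution m -> m x <= 1.
Proof.
move=> [H0 H1]; rewrite -H1 (bigD1 x) //= lerDl.
by apply: sumr_ge0.
Qed.

Lemma stoch_Pbar (R : realType) (S A : finType) (p : S -> A -> S -> R) (pi : S -> A -> R) :
  mdp_kernel p -> policy pi -> stochastic (Pbar p pi).
Proof.
move=> [hp0 hp1] [hpi0 hpi1]; split => [x y|x]; first by rewrite mulr_ge0.
rewrite sum_pair -(hp1 x.1 x.2); apply: eq_bigr => s _.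
by rewrite /Pbar /= -mulr_sumr hpi1 mulr1.
Qed.

Lemma stat_M (R : realType) (S A : finType) (p : S -> A -> S -> R) (pi : S -> A -> R) mu :
  stationary (Pstate p pi) mu -> forall y,
  \sum_x mubar mu pi x * lazyK (Pbar p pi) x y = mubar mu pi y.
Proof.
move=> [_ hmu] y.
have E : \sum_x mubar mu pi x * Pbar p pi x y = mubar mu pi y.
  rewrite sum_pair /mubar /Pbar /= -hmu mulr_suml; apply: eq_bigr => s _.
  rewrite /Pstate !mulr_sumr mulr_suml; apply: eq_bigr => a _.
  by rewrite /=; ring.
rewrite /lazyK.
under eq_bigr => x _ do rewrite mulrA mulrDr.
rewrite -mulr_suml big_split /= E (bigD1 y) //= eqxx mulr1 big1 ?addr0.
  by field.
by move=> z /negbTE ->; rewrite mulr0.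
Qed.

Lemma M_ge (R : realType) (S A : finType) (p : S -> A -> S -> R) (pi pib : S -> A -> R) :
  mdp_kernel p -> policy pi -> policy pib -> forall x y,
  polmin pi * lazyK (Pbar p pib) x y <= lazyK (Pbar p pi) x y.
Proof.
move=> [hp0 _] hpi hpib x y.
have hm1 : polmin pi <= pi y.1 y.2 by apply: (@fmin_le _ _ (fun x : S * A => pi x.1 x.2) y).
have hm0 : 0 <= polmin pi by apply: fmin_ge0 => z; case: hpi.
have hc1 : pi y.1 y.2 <= 1 by apply: distr_le1; split; case: hpi.
have hb1 : pib y.1 y.2 <= 1 by apply: distr_le1; split; case: hpib.
have hb0 : 0 <= pib y.1 y.2 by case: hpib.
have ha0 : 0 <= p x.1 x.2 y.1 by [].
have hd0 : 0 <= ((x == y)%:R : R) by rewrite ler0n.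
have hd1 : ((x == y)%:R : R) <= 1 by rewrite lern1 leq_b1.
rewrite /lazyK /Pbar.
move: (polmin pi) (pi y.1 y.2) (pib y.1 y.2) (p x.1 x.2 y.1) ((x == y)%:R : R)
  hm1 hm0 hc1 hb1 hb0 ha0 hd0 hd1 => m c b a d *.
have h1 : m * b <= c by nra.
have h2 : a * (m * b) <= a * c by apply: ler_wpM2l.
nra.
Qed.

Lemma marg (R : realType) (S A : finType) (p : S -> A -> S -> R) (pib : S -> A -> R) k s s' a' :
  \sum_a0 pib s a0 * mpow k (lazyK (Pbar p pib)) (s, a0) (s', a')
  = mpow k (lazyK (Pstate p pib)) s s' * pib s' a'.
Proof.
move: s' a'.
have Hd s1 s' a' : \sum_a1 pib s1 a1 * (((s1, a1) == (s', a'))%:R : R) = (s1 == s')%:R * pib s' a'.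
  case: (eqVneq s1 s') => [->|ne].
    rewrite (bigD1 a') //= eqxx mulr1 mul1r big1 ?addr0 // => a1 ne1.
    by rewrite xpair_eqE eqxx (negbTE ne1) mulr0.
  rewrite mul0r big1 // => a1 _.
  by rewrite xpair_eqE (negbTE ne) mulr0.
elim: k => [|k IH] s' a' /=.
  under eq_bigr => a0 _ do rewrite xpair_eqE.
  exact: (Hd s s' a').
under eq_bigr => a0 _ do rewrite mulr_sumr.
rewrite exchange_big sum_pair mulr_suml; apply: eq_bigr => s1 _.
transitivity (\sum_a1 (\sum_a0 pib s a0 * mpow k (lazyK (Pbar p pib)) (s, a0) (s1, a1))
                 * lazyK (Pbar p pib) (s1, a1) (s', a')).
  by apply: eq_bigr => a1 _; rewrite mulr_suml; apply: eq_bigr => a0 _; rewrite mulrA.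
under eq_bigr => a1 _ do rewrite IH.
set mL := mpow k _ s s1.
rewrite /lazyK /Pbar /Pstate /=.
transitivity ((mL / 2) *
   (\sum_a1 (pib s1 a1 * p s1 a1 s' * pib s' a') + \sum_a1 pib s1 a1 * (((s1, a1) == (s', a'))%:R : R))).
  rewrite -big_split mulr_sumr; apply: eq_bigr => a1 _ /=; ring.
rewrite (Hd s1 s' a') -mulr_suml.
rewrite (eq_bigr (fun a => p s1 a s' * pib s1 a)); last by move=> a _; rewrite mulrC.
ring.
Qed.

Lemma minor (R : realType) (S A : finType) (p : S -> A -> S -> R) (pi pib : S -> A -> R)
  (rb : nat) (deltab : R) :
  mdp_kernel p -> policy pi -> policy pib ->
  (forall s s', deltab <= mpow rb (lazyK (Pstate p pib)) s s') ->
  forall x s' a',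
  (polmin pi ^+ rb.+1 * deltab / 2) * pib s' a' <= mpow rb.+1 (lazyK (Pbar p pi)) x (s', a').
Proof.
move=> hp hpi hpib hrb x s' a'.
set m := polmin pi.
have hm0 : 0 <= m by apply: fmin_ge0 => z; case: hpi.
have hpb0 : forall s a, 0 <= pib s a by case: hpib.
have hp0 : forall s a s', 0 <= p s a s' by case: hp.
have hsM : stochastic (lazyK (Pbar p pi)) by apply/lazy_stoch/stoch_Pbar.
have hsMb : stochastic (lazyK (Pbar p pib)) by apply/lazy_stoch/stoch_Pbar.
have hMb0 := proj1 hsMb.
rewrite mpowS_l.
apply: (le_trans (y := \sum_s1 p x.1 x.2 s1 * (m ^+ rb.+1 / 2 *
   (mpow rb (lazyK (Pstate p pib)) s1 s' * pib s' a')))).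
  apply: (le_trans (y := \sum_s1 p x.1 x.2 s1 * (m^+rb.+1*deltab/2*pib s' a'))).
    by rewrite -mulr_suml (proj2 hp) mul1r.
  apply: ler_sum => s1 _; apply: ler_wpM2l => //.
  have -> : m ^+ rb.+1 * deltab / 2 * pib s' a' = m ^+ rb.+1 / 2 * (deltab * pib s' a') by ring.
  apply: ler_wpM2l; first by rewrite divr_ge0 ?exprn_ge0.
  by apply: ler_wpM2r => //.
rewrite sum_pair; apply: ler_sum => s1 _.
rewrite -marg !mulr_sumr; apply: ler_sum => a1 _.
set mb := mpow rb _ (s1, a1) (s', a').
have hmb0 : 0 <= mb by apply: mpow_ge0.
have hmM : m ^+ rb * mb <= mpow rb (lazyK (Pbar p pi)) (s1, a1) (s', a').
  by apply: mpow_mono => //; apply: M_ge.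
have hc : m <= pi s1 a1 by apply: (@fmin_le _ _ (fun x : S * A => pi x.1 x.2) (s1, a1)).
have hb1 : pib s1 a1 <= 1 by apply: distr_le1; split; case: hpib.
have hMx : p x.1 x.2 s1 * pi s1 a1 / 2 <= lazyK (Pbar p pi) x (s1, a1).
  rewrite /lazyK /Pbar /=; apply: ler_wpM2r; [by rewrite invr_ge0 ler0n | by rewrite lerDl ler0n].
apply: (le_trans (y := (p x.1 x.2 s1 * pi s1 a1 / 2) * (m ^+ rb * mb))).
  have -> : p x.1 x.2 s1 * (m ^+ rb.+1 / 2 * (pib s1 a1 * mb)) =
     (p x.1 x.2 s1 * (m * pib s1 a1) / 2) * (m ^+ rb * mb) by rewrite exprS; ring.
  apply: ler_wpM2r; first by rewrite mulr_ge0 ?exprn_ge0.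
  apply: ler_wpM2r; first by rewrite invr_ge0 ler0n.
  apply: ler_wpM2l => //.
  apply: le_trans hc; rewrite -[X in _ <= X]mulr1; exact: ler_wpM2l.
apply: ler_pM => //.
- by rewrite divr_ge0 ?ler0n // mulr_ge0 //; case: hpi.
- by rewrite mulr_ge0 ?exprn_ge0.
Qed.

Lemma Pstate_stoch (R : realType) (S A : finType) (p : S -> A -> S -> R) (pi : S -> A -> R) :
  mdp_kernel p -> policy pi -> stochastic (Pstate p pi).
Proof.
move=> [hp0 hp1] [hpi0 hpi1]; split => [s s'|s].
  by apply: sumr_ge0 => a _; apply: mulr_ge0.
rewrite /Pstate exchange_big /= -(hpi1 s); apply: eq_bigr => a _.
by rewrite -mulr_suml hp1 mul1r.
Qed.

Lemma mpow_le1 (R : realType) (X : finType) (P : X -> X -> R) k x y :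
  stochastic P -> mpow k P x y <= 1.
Proof.
move=> hP; rewrite -(@mpow_sum1 _ _ P k x hP) (bigD1 y) //= lerDl.
by apply: sumr_ge0 => z _; apply: mpow_ge0; case: hP.
Qed.

Theorem lemma8 (R : realType) (S A : finType)
  (p : S -> A -> S -> R) (pib : S -> A -> R) (mub : S -> R)
  (rb : nat) (deltab : R)
  (hp : mdp_kernel p)
  (hpib : policy pib) (hpib_pos : forall s a, 0 < pib s a)
  (hirr : irreducible (Pstate p pib))
  (hmub : stationary (Pstate p pib) mub)
  (hdelta : 0 < deltab)
  (hrb : forall s s', deltab <= mpow rb (lazyK (Pstate p pib)) s s')
  (pi : S -> A -> R) (mu : S -> R)
  (hpi : policy pi) (hpimin : 0 < polmin pi)
  (hmu : stationary (Pstate p pi) mu) :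
  let c := 1 - deltab * polmin pi ^+ rb.+1 * fmin mub * polmin pib / 2 in
  let Cbar := c^-1 in
  let rhobar := c `^ (rb.+1%:R)^-1 in
  forall (k : nat) (x : (S * A)%type),
    tv (fun y => mpow k (lazyK (Pbar p pi)) x y) (mubar mu pi) <= Cbar * rhobar ^+ k.
Proof.
move=> c Cbar rhobar k x.
have [[s0 a0] _] := @fmin_pos_ex _ _ _ hpimin.
set m := polmin pi.
set M := lazyK (Pbar p pi).
set mb := mubar mu pi.
have hsM : stochastic M by apply/lazy_stoch/stoch_Pbar.
have hstat : forall y, \sum_z mb z * M z y = mb y by apply: stat_M.
have hmbsum : \sum_z mb z = 1.
  rewrite sum_pair -(proj2 (proj1 hmu)); apply: eq_bigr => s _.
  by rewrite /mb /mubar /= -mulr_sumr (proj2 hpi) mulr1.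
pose v j y := mpow j M x y - mb y.
pose n j := \sum_y `|v j y|.
have vsum j : \sum_y v j y = 0 by rewrite sumrB mpow_sum1 // hmbsum subrr.
have vshift j i y : \sum_z v j z * mpow i M z y = v (j + i)%N y.
  elim: i y => [|i IH] y /=.
    rewrite addn0 (bigD1 y) //= eqxx mulr1 big1 ?addr0 // => z /negbTE ->.
    by rewrite mulr0.
  under eq_bigr => z _ do rewrite mulr_sumr.
  rewrite exchange_big /=.
  transitivity (\sum_w v (j + i)%N w * M w y).
    apply: eq_bigr => w _; rewrite -IH mulr_suml; apply: eq_bigr => z _.
    by rewrite mulrA.
  rewrite /v addnS /=.
  under eq_bigr => w _ do rewrite mulrBl.
  by rewrite sumrB hstat.
have n0 j : 0 <= n j by apply: sumr_ge0 => y _.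
have nstep j : n (j + 1)%N <= n j.
  have := @doeblin R _ M (fun _ => 0) (v j) (proj2 hsM)
     (fun z y => proj1 hsM z y) (vsum j).
  rewrite big1_eq subr0 mul1r.
  have E y : \sum_z v j z * M z y = v (j + 1)%N y.
    by rewrite -vshift; apply: eq_bigr => z _; rewrite mpow1.
  by under eq_bigr => y _ do rewrite E.
have hb0 : forall s a, 0 <= pib s a by case: hpib.
have hmub0 : forall s, 0 <= mub s by case: (proj1 hmub).
have hm0 : 0 <= m by apply: fmin_ge0 => z; case: hpi.
have hm1 : m <= 1.
  apply: (le_trans (@fmin_le _ _ (fun x : S * A => pi x.1 x.2) (s0, a0))).
  by apply: distr_le1; split; case: hpi.
have hd1 : deltab <= 1.
  apply: (le_trans (hrb s0 s0)); apply: mpow_le1.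
  by apply/lazy_stoch/Pstate_stoch.
set K := m ^+ rb.+1 * deltab / 2.
have hK0 : 0 <= K by rewrite /K divr_ge0 ?ler0n // mulr_ge0 ?exprn_ge0 // ltW.
have hK1 : K <= 1 / 2.
  rewrite /K ler_pM2r ?invr_gt0 ?ltr0n // -[1]mul1r.
  by apply: ler_pM => //; [rewrite exprn_ge0 | apply: ltW | apply: exprn_ile1].
pose eta (y : S * A) := K * pib y.1 y.2 * mub y.1.
have hetasum : \sum_y eta y = K.
  rewrite sum_pair -[RHS]mulr1 -(proj2 (proj1 hmub)) mulr_sumr.
  apply: eq_bigr => s _.
  by rewrite /eta /= -mulr_suml -mulr_sumr (proj2 hpib s) mulr1.
have nstepr j : n (j + rb.+1)%N <= (1 - K) * n j.
  have := @doeblin R _ (mpow rb.+1 M) eta (v j) (fun z => @mpow_sum1 _ _ M rb.+1 z hsM) _ (vsum j).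
  rewrite hetasum.
  under eq_bigr => y _ do rewrite (vshift j rb.+1 y).
  apply => z [s' a'].
  apply: le_trans (@minor _ _ _ p pi pib rb deltab hp hpi hpib hrb z s' a').
  rewrite /eta /= -[X in _ <= X]mulr1; apply: ler_wpM2l.
    by rewrite mulr_ge0.
  by apply: distr_le1; case: hmub.
set e := deltab * m ^+ rb.+1 * fmin mub * polmin pib / 2.
have hf0 : 0 <= fmin mub by apply: fmin_ge0.
have hq0 : 0 <= polmin pib by apply: fmin_ge0 => z.
have he : e <= K.
  have hf1 : fmin mub <= 1.
    by apply: le_trans (@fmin_le _ _ mub s0) _; apply: distr_le1; case: hmub.
  have hq1 : polmin pib <= 1.
    apply: (le_trans (@fmin_le _ _ (fun x : S * A => pib x.1 x.2) (s0, a0))).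
    by apply: distr_le1; split; case: hpib.
  have -> : e = K * (fmin mub * polmin pib) by rewrite /e /K; ring.
  rewrite -[X in _ <= X]mulr1; apply: ler_wpM2l => //.
  by rewrite -[1]mul1r; apply: ler_pM.
have he0 : 0 <= e.
  have -> : e = K * (fmin mub * polmin pib) by rewrite /e /K; ring.
  by apply: mulr_ge0 => //; apply: mulr_ge0.
have hc0 : 0 < c by rewrite /c -/e; lra.
have hc1 : c <= 1 by rewrite /c -/e; lra.
have hKc : 1 - K <= c by rewrite /c -/e; lra.
have hnq q : n (q * rb.+1)%N <= 2 * c ^+ q.
  elim: q => [|q IH].
    rewrite mul0n expr0 mulr1 /n /v.
    apply: (le_trans (y := \sum_y ((x == y)%:R + mb y))).
      apply: ler_sum => y _ /=; apply: (le_trans (ler_normB _ _)).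
      rewrite ger0_norm ?ler0n // ger0_norm //.
      by rewrite /mb /mubar mulr_ge0 //; [case: (proj1 hmu) | case: hpi].
    rewrite big_split /= hmbsum (bigD1 x) //= eqxx big1 ?addr0 //.
    by move=> z; rewrite eq_sym => /negbTE ->.
  rewrite mulSn addnC.
  apply: (le_trans (nstepr _)).
  rewrite exprS mulrCA; apply: ler_pM => //; lra.
have hnj a j : n (a + j)%N <= n a.
  elim: j => [|j IH]; first by rewrite addn0.
  by apply: le_trans IH; rewrite addnS -addn1; apply: nstep.
set q := (k %/ rb.+1)%N.
have hk : k = (q * rb.+1 + k %% rb.+1)%N by apply: divn_eq.
have htv : tv (fun y => mpow k M x y) mb <= c ^+ q.
  rewrite /tv -/(n k) hk.
  rewrite ler_pdivrMr ?ltr0n // mulrC.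
  exact: le_trans (hnj _ _) (hnq q).
apply: (le_trans htv).
have hrho0 : 0 <= rhobar by apply: powR_ge0.
have hrhoc : rhobar ^+ rb.+1 = c.
  rewrite /rhobar -powR_mulrn ?powR_ge0 // -powRrM mulVf ?pnatr_eq0 //.
  by rewrite powRr1 // ltW.
have hrho1 : rhobar <= 1.
  by rewrite -(@expr_le1 _ rb.+1) // hrhoc.
have hle : c ^+ q.+1 <= rhobar ^+ k.
  rewrite -hrhoc -exprM; apply: ler_wiXn2l => //.
  have hr := ltn_pmod k (ltn0Sn rb).
  rewrite mulnS [X in (X <= _)%N]hk (mulnC q) (addnC (rb.+1 * q)) leq_add2r.
  exact: ltnW.
rewrite /Cbar -[c ^+ q]mul1r -(mulVf (lt0r_neq0 hc0)) -mulrA -exprS.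
by apply: ler_wpM2l => //; rewrite invr_ge0 ltW.
Qed.
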